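(* Consider the general LPP model described in the context, fix $\eta_0\in(0,\infty)$, $u\in\mathbb{R}$, set $\eta=\eta_0+ut^{-2/3}$, and suppose Assumptions A2 and A3 hold. Let $D$ be a probability distribution. If, as $t\to\infty$, $$\frac{\tilde L_{\mathcal{L}^-\to(\eta t,t)}-\mu t}{t^{1/3}}-\frac{\tilde L_{\mathcal{L}^+\to E^+}-\mu t+\mu_0t^\nu}{t^{1/3}}\Rightarrow D,$$ then also $$\frac{\tilde L_{\mathcal{L}^-\to(\eta t,t)}-\mu t}{t^{1/3}}-\frac{\tilde L_{\mathcal{L}^+\to E^+}+L_{E^+\to(\eta t,t)}-\mu t}{t^{1/3}}\Rightarrow D.$$
   Context: LPP: for independent nonnegative $\{\omega_{i,j}\}$, an up-right path is a sequence of points of $\mathbb{Z}^2$ with increments in $\{(1,0),(0,1)\}$; $L_{S_A\to S_E}=\max_\pi\sum_{(i,j)\in\pi\setminus S_A}\omega_{i,j}$ over up-right paths from $S_A$ to $S_E$ ($-\infty$ if none); $\pi^{\max}_{L_{A\to B}}$ is the a.s. unique maximizing path; non-integer coordinates are understood as integer parts. General model: integers $x_k(0)$, $k\in\mathbb{Z}$, with $x_{k+1}(0)<x_k(0)$, $x_0(0)=1$, $x_1(0)<-1$; $\omega_{i,j}$ independent exponential with rate $v_j>0$; $\mathcal{L}^+=\{(k+x_k(0),k):k>0\}$, $\mathcal{L}^-=\{(k+x_k(0),k):k\le0\}$. Let $\mu\in\mathbb{R}$ and $G_1(\cdot;u)$ be a continuous distribution function. Assumption A2: there exist $\kappa,\mu_0\in\mathbb{R}$,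 $\nu\in(1/3,1)$ and a continuous distribution function $G_0(\cdot;u)$ such that, with $E^+=(\eta t-\kappa t^\nu,t-t^\nu)$, for all $s$: $\lim_{t\to\infty}\mathbb{P}((L_{E^+\to(\eta t,t)}-\mu_0t^\nu)/t^{\nu/3}\le s)=G_0(s;u)$ and $\lim_{t\to\infty}\mathbb{P}((L_{\mathcal{L}^+\to E^+}-\mu t+\mu_0t^\nu)/t^{1/3}\le s)=G_1(s;u)$. Assumption A3: for some $\beta\in(0,\nu)$, with $D_\gamma=(\lfloor\gamma\eta t\rfloor,\lfloor\gamma t\rfloor)$: $\lim_{t\to\infty}\mathbb{P}(\bigcup_{\gamma\in[0,1-t^{\beta-1}]}\{D_\gamma\in\pi^{\max}_{L_{\mathcal{L}^+\to E^+}}\})=0$ and $\lim_{t\to\infty}\mathbb{P}(\bigcup_{\gamma\in[0,1-t^{\beta-1}]}\{D_\gamma\in\pi^{\max}_{L_{\mathcal{L}^-\to(\eta t,t)}}\})=0$. $\tilde L_{B\to C}$ is defined like $L_{B\to C}$ but maximizing only over up-right paths containing none of the points $D_\gamma$, $\gamma\in[0,1-t^{\beta-1}]$. ''$\Rightarrow$'' denotes convergence in distribution. *)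

(* Defs.v *)
From HB Require Import structures.
From mathcomp Require Import all_boot all_order all_algebra.
From mathcomp Require Import all_classical all_reals all_analysis.
Set Implicit Arguments. Unset Strict Implicit. Unset Printing Implicit Defensive.
Import Order.TTheory GRing.Theory Num.Theory.
Import numFieldNormedType.Exports.
Local Open Scope classical_set_scope.
Local Open Scope ring_scope.

Section LPP.
Variable R : realType.

Definition pt := (int * int)%type.

Definition upstep (p q : pt) : bool :=
  (q == (p.1 + 1, p.2)%R) || (q == (p.1, p.2 + 1)%R).

Definition upright (s : seq pt) : bool := (s != [::]) && sorted upstep s.

Definition path_from_to (SA SE : set pt) (s : seq pt) : Prop :=
  upright s /\ SA (head (0, 0)%R s) /\ SE (last (0, 0)%R s).

Definition path_weight (w : pt -> R) (SA : set pt) (s : seq pt) : R :=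
  \sum_(q <- s | q \notin SA) w q.

(** Restricted LPP: sup over up-right paths from SA to SE avoiding Forb
    (-oo if there is no such path). *)
Definition LPPr (w : pt -> R) (Forb SA SE : set pt) : \bar R :=
  ereal_sup [set (path_weight w SA s)%:E | s in
     [set s | path_from_to SA SE s /\ (forall q, q \in s -> ~ Forb q)]].

Definition LPP (w : pt -> R) (SA SE : set pt) : \bar R := LPPr w set0 SA SE.

Definition maxpath_hits (w : pt -> R) (SA SE Dset : set pt) : Prop :=
  exists s, path_from_to SA SE s /\ (path_weight w SA s)%:E = LPP w SA SE /\
            exists q, q \in s /\ Dset q.

(** Point with (possibly) non-integer coordinates: integer parts. *)
Definition ipt (a b : R) : pt := (Num.floor a, Num.floor b).

End LPP.

Section Prob.
Context {d : measure_display} {T : measurableType d} {R : realType}.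
Variable P : probability T R.
Local Open Scope ereal_scope.

Definition mutually_independent {I : eqType} (X : I -> T -> R) : Prop :=
  (forall i, measurable_fun setT (X i)) /\
  forall (s : seq I) (B : I -> set R), uniq s -> (forall i, measurable (B i)) ->
    P [set w | forall i, i \in s -> B i (X i w)] =
    \prod_(i <- s) P (X i @^-1` B i).

Definition exponential_law (v : R) (X : T -> R) : Prop :=
  forall r : R, P [set w | (X w <= r)%R] =
    (if (r < 0)%R then 0%R else (1 - expR (- (v * r))))%R%:E.

Definition cvg_distr (X : R -> T -> \bar R) (D : probability R R) : Prop :=
  forall s : R, {for s, continuous (fun x : R => fine (D `]-oo, x]%classic))} ->
    fine (P [set w | X t w <= s%:E]) @[t --> +oo%R] -->
      fine (D `]-oo, s]%classic).

End Prob.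

Definition cont_distr_fun {R : realType} (G : R -> R) : Prop :=
  {homo G : x y / (x <= y)%R} /\ continuous G /\
  G x @[x --> -oo%R] --> (0 : R) /\ G x @[x --> +oo%R] --> (1 : R).

Section Geometry.
Variable R : realType.
Local Open Scope ring_scope.

Definition wt {T : Type} (om : pt -> T -> R) (w : T) : pt -> R := fun p => om p w.

Definition eta_t (eta0 u t : R) : R := eta0 + u * t `^ (- (2 / 3)).

Definition target (eta0 u t : R) : pt := ipt (eta_t eta0 u t * t) t.

Definition Eplus (eta0 u kappa nu t : R) : pt :=
  ipt (eta_t eta0 u t * t - kappa * t `^ nu) (t - t `^ nu).

Definition Dset (eta0 u beta t : R) : set pt :=
  [set ipt (g * eta_t eta0 u t * t) (g * t) | g in `[0, 1 - t `^ (beta - 1)]%classic].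

Definition Lplus (x0 : int -> int) : set pt :=
  [set p | exists k : int, 0 < k /\ p = (k + x0 k, k)].
Definition Lminus (x0 : int -> int) : set pt :=
  [set p | exists k : int, k <= 0 /\ p = (k + x0 k, k)].
End Geometry.

(* Main.v *)
Require Import Defs.
From HB Require Import structures.
From mathcomp Require Import all_boot all_order all_algebra.
From mathcomp Require Import all_classical all_reals all_analysis.
From mathcomp Require Import measurable_realfun.
From mathcomp Require Import ring lra.
Import Order.TTheory GRing.Theory Num.Theory.
Import numFieldNormedType.Exports.
Local Open Scope classical_set_scope.
Local Open Scope ring_scope.
Lemma mono_cont (R : realType) (F : R -> R) (ndF : {homo F : x y / x <= y}) x :
  ~ discontinuity F x -> {for x, continuous F}.
Proof.
move=> nd.
have cl : cvg (F y @[y --> x^'-]).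
  apply: nondecreasing_at_left_is_cvgr; first by apply: nearW => z p q _ _; exact: ndF.
  near=> z; exists (F x) => _ [y /= + <-]; rewrite in_itv/= => /andP[_ /ltW]; exact: ndF.
have cr : cvg (F y @[y --> x^'+]).
  apply: nondecreasing_at_right_is_cvgr; first by apply: nearW => z p q _ _; exact: ndF.
  near=> z; exists (F x) => _ [y /= + <-]; rewrite in_itv/= => /andP[/ltW + _]; exact: ndF.
have e : lim (F y @[y --> x^'-]) = lim (F y @[y --> x^'+]).
  apply/eqP; apply/negPn/negP => ne; apply: nd; by split.
have l1 : lim (F y @[y --> x^'-]) <= F x.
  apply: limr_le => //; near=> y; apply: ndF; apply/ltW; near: y; exact: nbhs_left_lt.
have l2 : F x <= lim (F y @[y --> x^'+]).
  apply: limr_ge => //; near=> y; apply: ndF; apply/ltW; near: y; exact: nbhs_right_gt.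
have El : lim (F y @[y --> x^'-]) = F x by apply/le_anti; rewrite l1 e l2.
apply/left_right_continuousP; split.
  have := cl; by rewrite El.
have := cr; by rewrite -e El.
Unshelve. all: by end_near. Qed.

Lemma exists_cont (R : realType) (F : R -> R) (ndF : {homo F : x y / x <= y}) (a b : R) :
  a < b -> exists x, a < x < b /\ {for x, continuous F}.
Proof.
move=> ab; apply/not_existsP => H.
have C := @discontinuity_countable R a b F (fun p q _ _ => @ndF p q).
have : countable `]a, b[%classic.
  apply: sub_countable C; apply/subset_card_le => y /= yab; split => //.
  apply/asboolP; apply: contrapT => nd; apply: (H y); split.
    by move: yab; rewrite /= in_itv.
  by apply: mono_cont => // /asboolP.
move/countable_lebesgue_measure0; rewrite lebesgue_measure_itv/= => /eqP.
rewrite lte_fin ab -EFinD eqe subr_eq0 => /eqP ba.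
by move: ab; rewrite ba ltxx.
Qed.
Lemma meas_weight (R : realType) d (Omega : measurableType d) (om : pt -> Omega -> R)
  (mom : forall p, measurable_fun setT (om p)) SA s :
  measurable_fun setT (fun w => path_weight (wt om w) SA s).
Proof.
rewrite /path_weight.
under eq_fun do rewrite big_mkcond.
apply: measurable_sum => q.
by case: (q \notin SA) => //=; exact: mom.
Qed.

Lemma meas_LPPr (R : realType) d (Omega : measurableType d) (om : pt -> Omega -> R)
  (mom : forall p, measurable_fun setT (om p)) Forb SA SE :
  measurable_fun [set: Omega] (fun w : Omega => LPPr (wt om w) Forb SA SE : \bar R).
Proof.
pose S := [set s | path_from_to SA SE s /\ (forall q, q \in s -> ~ Forb q)].
pose g (n : nat) (w : Omega) : \bar R :=
  if @unpickle (seq pt) n is Some s then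
    (if `[< S s >] then (path_weight (wt om w) SA s)%:E else -oo)%E
  else -oo%E.
have mg : forall n, measurable_fun setT (g n).
  move=> n; rewrite /g; case: (unpickle n) => [s|]; last exact: measurable_cst.
  case: `[< S s >]; last exact: measurable_cst.
  by apply/measurable_EFinP; exact: meas_weight.
have -> : (fun w => LPPr (wt om w) Forb SA SE) = (fun w => esups (g ^~ w) 0%N).
  apply/funext => w; rewrite /esups /= /LPPr.
  apply/le_anti/andP; split.
    apply: ge_ereal_sup => _ [s Ss <-]; apply: ereal_sup_ubound.
    exists (pickle s) => //; rewrite /g pickleK.
    by case: asboolP.
  apply: ge_ereal_sup => _ [n _ <-]; rewrite /g.
  case: (unpickle n) => [s|]; last by rewrite leNye.
  case: asboolP => [Ss|_]; last by rewrite leNye.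
  by apply: ereal_sup_ubound; exists s.
exact: measurable_fun_esups.
Qed.
Section E. Local Open Scope ereal_scope.
Lemma alg (R : realType) (a b cc : \bar R) (m k c c0 z : R) : (0 < c)%R -> (0 < c0)%R ->
  (cc - k%:E) * c0%:E = z%:E ->
  (a - m%:E) * c%:E - (b + cc - m%:E) * c%:E =
  ((a - m%:E) * c%:E - (b - m%:E + k%:E) * c%:E) - (z * c / c0)%:E.
Proof.
move=> cp c0p h.
have -> : cc = (z / c0 + k)%:E.
  move: h; case: cc => [x| |] //=.
    move=> [<-]; congr EFin; field; exact: lt0r_neq0.
  by rewrite gt0_mulye ?lte_fin.
  by rewrite gt0_mulNye ?lte_fin.
case: a => [a| |]; case: b => [b| |] => //=.
all: try (rewrite ?gt0_mulye ?gt0_mulNye ?lte_fin //=; fail).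
by rewrite -EFinD -EFinM -!EFinD; congr EFin; field; exact: lt0r_neq0.
Qed.
Lemma incl1 (R : realType) (X Y : \bar R) (r s eps : R) :
  X = Y - r%:E -> (`|r| < eps)%R -> X <= s%:E -> Y <= (s + eps)%:E.
Proof.
move=> -> re; case: Y => [y| |] //=.
  rewrite -EFinD !lee_fin => h.
  have : (r <= `|r|)%R := ler_norm r.
  lra.
all: by rewrite ?leNye ?leye_eq.
Qed.

Lemma incl2 (R : realType) (X Y : \bar R) (r s eps : R) :
  X = Y - r%:E -> (`|r| < eps)%R -> Y <= (s - eps)%:E -> X <= s%:E.
Proof.
move=> -> re; case: Y => [y| |] //=.
  rewrite -EFinD !lee_fin => h.
  have : (- r <= `|r|)%R by rewrite -normrN ler_norm.
  lra.
all: by rewrite ?leNye ?leye_eq.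
Qed.

Lemma zbound (R : realType) (Zv : \bar R) (M rho eps : R) : (0 < rho)%R ->
  (rho * M < eps)%R -> ~ (Zv <= (- M)%:E) -> Zv <= M%:E ->
  exists z, Zv = z%:E /\ (`|z * rho| < eps)%R.
Proof.
move=> rp rM; case: Zv => [z| |] //=; last by rewrite leNye.
rewrite !lee_fin => h1 h2; exists z; split => //.
rewrite normrM (gtr0_norm rp).
have : (`|z| <= M)%R.
  by rewrite ler_norml h2 andbT; move/negP: h1; rewrite -ltNge => /ltW; rewrite lerNl.
move=> zM; apply: le_lt_trans rM.
by rewrite mulrC ler_pM2l.
Qed.

Lemma rho_small (R : realType) (nu M eps : R) : (nu < 1)%R -> (0 < eps)%R -> (0 < M)%R ->
  \forall t \near +oo%R, (t `^ (nu / 3) / t `^ (1 / 3) * M < eps)%R.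
Proof.
move=> nu1 ep Mp.
pose a := (1 / 3 - nu / 3)%R.
have ap : (0 < a)%R by rewrite /a; lra.
pose T := ((2 * M / eps) `^ (a^-1) + 1)%R.
near=> t.
have tT : (T <= t)%R by near: t; apply: nbhs_pinfty_ge; exact: num_real.
have t0 : (0 < t)%R by apply: lt_le_trans tT; rewrite /T; have := powR_ge0 (2 * M / eps) a^-1; lra.
have e : (t `^ (nu / 3) / t `^ (1 / 3) = (t `^ a)^-1)%R.
  rewrite -powRB; last by apply/implyP => _; rewrite gt_eqF.
  by rewrite -powRN /a; congr powR; lra.
rewrite e.
have h1 : ((2 * M / eps) < t `^ a)%R.
  have q : (2 * M / eps = ((2 * M / eps) `^ (a^-1)) `^ a)%R.
    rewrite -powRrM mulVf ?gt_eqF // powRr1 //.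
    by apply: divr_ge0; lra.
  rewrite {1}q; apply: gt0_ltr_powR => //.
  - by rewrite nnegrE powR_ge0.
  - by rewrite nnegrE ltW.
have tap : (0 < t `^ a)%R by apply: powR_gt0.
move: h1; rewrite ltr_pdivrMr // => h1.
rewrite mulrC ltr_pdivrMr //; lra.
Unshelve. all: by end_near. Qed.
End E.
Lemma fineP_le (R : realType) d (T : measurableType d) (P : probability T R) (A B C : set T) :
  measurable A -> measurable B -> measurable C -> A `<=` B `|` C ->
  (fine (P A) <= fine (P B) + fine (P C))%R.
Proof.
move=> mA mB mC ABC.
rewrite -fineD ?fin_num_measure //.
apply: fine_le.
- exact: fin_num_measure.
- by rewrite fin_numD !fin_num_measure.
apply: le_trans (measureU2 _ mB mC).
apply: le_measure => //; rewrite inE //; exact: measurableU.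
Qed.

Lemma fineP_C (R : realType) d (T : measurableType d) (P : probability T R) (A : set T) :
  measurable A -> fine (P (~` A)) = (1 - fine (P A))%R.
Proof.
move=> mA; rewrite probability_setC //.
by rewrite fineB ?fin_num_measure.
Qed.

Lemma fineP_mono (R : realType) d (T : measurableType d) (P : probability T R) (A B : set T) :
  measurable A -> measurable B -> A `<=` B -> (fine (P A) <= fine (P B))%R.
Proof.
move=> mA mB AB; apply: fine_le; rewrite ?fin_num_measure //.
by apply: le_measure => //; rewrite inE.
Qed.

Lemma meas_le (R : realType) d (T : measurableType d) (f : T -> \bar R) (s : R) :
  measurable_fun setT f -> measurable [set w | (f w <= s%:E)%E].
Proof.
move=> mf; have := @measurable_lee _ T R setT measurableT f (fun=> s%:E) mf (measurable_cst _).
by rewrite setTI.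
Qed.
Theorem proposition2p8
  (R : realType) (d : measure_display) (Omega : measurableType d)
  (P : probability Omega R)
  (x0 : int -> int) (v : int -> R) (om : pt -> Omega -> R)
  (eta0 u mu : R) (G1 : R -> R)
  (kappa mu0 nu : R) (G0 : R -> R) (beta : R)
  (D : probability R R) :
  (* the general model *)
  (forall k, x0 (k + 1) < x0 k) -> x0 0 = 1 -> x0 1 < -1 ->
  (forall j, 0 < v j) ->
  mutually_independent P om ->
  (forall p : pt, exponential_law P (v p.2) (om p)) ->
  0 < eta0 -> cont_distr_fun G1 ->
  (* Assumption A2 *)
  1 / 3 < nu < 1 -> cont_distr_fun G0 ->
  (forall s : R,
     fine (P [set w | ((LPP (wt om w) [set Eplus eta0 u kappa nu t]
                          [set target eta0 u t] - (mu0 * t `^ nu)%:E)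
                       * ((t `^ (nu / 3))^-1)%:E <= s%:E)%E])
       @[t --> +oo] --> G0 s) ->
  (forall s : R,
     fine (P [set w | ((LPP (wt om w) (Lplus x0) [set Eplus eta0 u kappa nu t]
                          - (mu * t)%:E + (mu0 * t `^ nu)%:E)
                       * ((t `^ (1 / 3))^-1)%:E <= s%:E)%E])
       @[t --> +oo] --> G1 s) ->
  (* Assumption A3 *)
  0 < beta < nu ->
  fine (P [set w | maxpath_hits (wt om w) (Lplus x0) [set Eplus eta0 u kappa nu t]
                     (Dset eta0 u beta t)]) @[t --> +oo] --> (0 : R) ->
  fine (P [set w | maxpath_hits (wt om w) (Lminus x0) [set target eta0 u t]
                     (Dset eta0 u beta t)]) @[t --> +oo] --> (0 : R) ->
  (* convergence hypothesis and conclusion *)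
  cvg_distr P (fun t w =>
      ((LPPr (wt om w) (Dset eta0 u beta t) (Lminus x0) [set target eta0 u t]
          - (mu * t)%:E) * ((t `^ (1 / 3))^-1)%:E
     - (LPPr (wt om w) (Dset eta0 u beta t) (Lplus x0) [set Eplus eta0 u kappa nu t]
          - (mu * t)%:E + (mu0 * t `^ nu)%:E) * ((t `^ (1 / 3))^-1)%:E)%E) D ->
  cvg_distr P (fun t w =>
      ((LPPr (wt om w) (Dset eta0 u beta t) (Lminus x0) [set target eta0 u t]
          - (mu * t)%:E) * ((t `^ (1 / 3))^-1)%:E
     - (LPPr (wt om w) (Dset eta0 u beta t) (Lplus x0) [set Eplus eta0 u kappa nu t]
          + LPP (wt om w) [set Eplus eta0 u kappa nu t] [set target eta0 u t]
          - (mu * t)%:E) * ((t `^ (1 / 3))^-1)%:E)%E) D.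

Proof.
move=> hx1 hx0 hx2 hv [mom _] hexp heta hG1 hnu [G0mono [G0cont [G0m G0p]]] hA2a hA2b
  hbeta hA3a hA3b hyp s scont.
pose F := fun x : R => fine (D `]-oo, x]%classic).
pose A := fun t w => LPPr (wt om w) (Dset eta0 u beta t) (Lminus x0) [set target eta0 u t].
pose B := fun t w => LPPr (wt om w) (Dset eta0 u beta t) (Lplus x0) [set Eplus eta0 u kappa nu t].
pose C := fun t w => LPP (wt om w) [set Eplus eta0 u kappa nu t] [set target eta0 u t].
pose c := fun t : R => (t `^ (1/3))^-1.
pose c0 := fun t : R => (t `^ (nu/3))^-1.
pose Z := fun t w => ((C t w - (mu0 * t `^ nu)%:E) * (c0 t)%:E)%E.
pose Y := fun t w => ((A t w - (mu*t)%:E) * (c t)%:E - (B t w - (mu*t)%:E + (mu0 * t `^ nu)%:E) * (c t)%:E)%E.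
pose X := fun t w => ((A t w - (mu*t)%:E) * (c t)%:E - (B t w + C t w - (mu*t)%:E) * (c t)%:E)%E.
change (fine (P [set w | (X t w <= s%:E)%E]) @[t --> +oo] --> F s).
have hY : forall s', {for s', continuous F} -> fine (P [set w | (Y t w <= s'%:E)%E]) @[t --> +oo] --> F s' := hyp.
have hZ : forall s', fine (P [set w | (Z t w <= s'%:E)%E]) @[t --> +oo] --> G0 s' := hA2a.
have mA t : measurable_fun setT (A t) by exact: meas_LPPr.
have mB t : measurable_fun setT (B t) by exact: meas_LPPr.
have mC t : measurable_fun setT (C t) by exact: meas_LPPr.
have mcst (r : \bar R) : measurable_fun [set: Omega] (fun _ => r) by exact: measurable_cst.
have mX t : measurable_fun setT (X t).
  apply: emeasurable_funB; apply: emeasurable_funM => //;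
    repeat apply: emeasurable_funB => //; repeat apply: emeasurable_funD => //.
have mY t : measurable_fun setT (Y t).
  apply: emeasurable_funB; apply: emeasurable_funM => //;
    repeat apply: emeasurable_funB => //; repeat apply: emeasurable_funD => //.
have mZ t : measurable_fun setT (Z t).
  by apply: emeasurable_funM => //; apply: emeasurable_funB.
have Fmono : {homo F : x y / x <= y}.
  move=> x y xy; apply: fineP_mono => //.
  move=> z /=; rewrite !in_itv /= => zx; exact: le_trans zx xy.
apply/cvgrPdist_lt => dl dlp.
pose dd := dl / 8.
have ddp : 0 < dd by rewrite /dd; lra.
have /cvgrPdist_lt /(_ dd ddp) /nbhs_normP [et etp hball] := scont.
have [s1 [/andP [ss1 s1s] cs1]] := @exists_cont _ F Fmono s (s + et) ltac:(rewrite ltrDl; exact: etp).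
have [s2 [/andP [s2s ss2] cs2]] := @exists_cont _ F Fmono (s - et) s ltac:(rewrite ltrBlDr ltrDl; exact: etp).
have Fs1 : `|F s - F s1| < dd by apply: hball; rewrite /ball_ /= distrC gtr0_norm; lra.
have Fs2 : `|F s - F s2| < dd by apply: hball; rewrite /ball_ /= gtr0_norm; lra.
have /cvgrPdist_lt /(_ dd ddp) [M1 [_ HM1]] := G0m.
have /cvgrPdist_lt /(_ dd ddp) [M2 [_ HM2]] := G0p.
pose M := `|M1| + `|M2| + 1.
have Mp : 0 < M by rewrite /M; have := normr_ge0 M1; have := normr_ge0 M2; lra.
have GM1 : `|0 - G0 (- M)| < dd.
  apply: HM1; rewrite /M; have := ler_norm (- M1); rewrite normrN; have := normr_ge0 M2; lra.
have GM2 : `|1 - G0 M| < dd.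
  apply: HM2; rewrite /M; have := ler_norm M2; have := normr_ge0 M1; lra.
pose eps := Num.min (s1 - s) (s - s2).
have epsp : 0 < eps by rewrite /eps lt_min; apply/andP; split; lra.
have eps1 : eps <= s1 - s by rewrite /eps ge_min lexx.
have eps2 : eps <= s - s2 by rewrite /eps ge_min lexx orbT.
have nu1 : nu < 1 by case/andP: hnu.
have key : forall t w, 0 < t -> t `^ (nu/3) / t `^ (1/3) * M < eps ->
    ~ (Z t w <= (- M)%:E)%E -> (Z t w <= M%:E)%E ->
    exists r, X t w = (Y t w - r%:E)%E /\ `|r| < eps.
  move=> t w tp hr h1 h2.
  have rp : 0 < t `^ (nu/3) / t `^ (1/3) by rewrite divr_gt0 // powR_gt0.
  have [z [Ze zl]] := @zbound _ _ _ _ _ rp hr h1 h2.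
  exists (z * (t `^ (nu/3) / t `^ (1/3))); split => //.
  have := @alg R (A t w) (B t w) (C t w) (mu * t) (mu0 * t `^ nu) (c t) (c0 t) z.
  rewrite /c /c0 invr_gt0 powR_gt0 // invr_gt0 powR_gt0 // => /(_ isT isT Ze) e.
  rewrite /X e; congr (_ - _)%E; congr EFin; rewrite invrK; ring.
have /cvgrPdist_lt /(_ dd ddp) e1 := hZ (- M).
have /cvgrPdist_lt /(_ dd ddp) e2 := hZ M.
have /cvgrPdist_lt /(_ dd ddp) e3 := hY s1 cs1.
have /cvgrPdist_lt /(_ dd ddp) e4 := hY s2 cs2.
have e5 := @rho_small R nu M eps nu1 epsp Mp.
move: e1 => [T1 [_ E1]]; move: e2 => [T2 [_ E2]]; move: e3 => [T3 [_ E3]].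
move: e4 => [T4 [_ E4]]; move: e5 => [T5 [_ E5]].
exists (`|T1| + `|T2| + `|T3| + `|T4| + `|T5|); split; first exact: num_real.
move=> t tT.
have n1 := ler_norm T1; have n2 := ler_norm T2; have n3 := ler_norm T3.
have n4 := ler_norm T4; have n5 := ler_norm T5.
have m1 := normr_ge0 T1; have m2 := normr_ge0 T2; have m3 := normr_ge0 T3.
have m4 := normr_ge0 T4; have m5 := normr_ge0 T5.
have tp : 0 < t by lra.
have {}E1 := E1 t ltac:(lra).
have {}E2 := E2 t ltac:(lra).
have {}E3 := E3 t ltac:(lra).
have {}E4 := E4 t ltac:(lra).
have {}E5 := E5 t ltac:(lra).
pose SX := [set w | (X t w <= s%:E)%E].
pose SY1 := [set w | (Y t w <= s1%:E)%E].
pose SY2 := [set w | (Y t w <= s2%:E)%E].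
pose SZm := [set w | (Z t w <= (- M)%:E)%E].
pose SZp := [set w | (Z t w <= M%:E)%E].
have mSX : measurable SX by exact: meas_le.
have mSY1 : measurable SY1 by exact: meas_le.
have mSY2 : measurable SY2 by exact: meas_le.
have mSZm : measurable SZm by exact: meas_le.
have mSZp : measurable SZp by exact: meas_le.
have mBs : measurable (SZm `|` ~` SZp) by apply: measurableU => //; exact: measurableC.
have incA : SX `<=` SY1 `|` (SZm `|` ~` SZp).
  move=> w Xw.
  have [h1|h1] := pselect (Z t w <= (- M)%:E)%E; first by right; left.
  have [h2|h2] := pselect (Z t w <= M%:E)%E; last by right; right.
  left; have [r [Xe rl]] := key t w tp E5 h1 h2.
  apply: le_trans (@incl1 _ _ _ _ _ _ Xe rl Xw) _; rewrite lee_fin; lra.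
have incB : SY2 `<=` SX `|` (SZm `|` ~` SZp).
  move=> w Yw.
  have [h1|h1] := pselect (Z t w <= (- M)%:E)%E; first by right; left.
  have [h2|h2] := pselect (Z t w <= M%:E)%E; last by right; right.
  left; have [r [Xe rl]] := key t w tp E5 h1 h2.
  apply: (@incl2 _ _ _ _ _ eps Xe rl); apply: le_trans Yw _; rewrite lee_fin; lra.
have p1 := @fineP_le _ _ _ P _ _ _ mSX mSY1 mBs incA.
have p2 := @fineP_le _ _ _ P _ _ _ mSY2 mSX mBs incB.
have p3 := @fineP_le _ _ _ P _ _ _ mBs mSZm (measurableC mSZp) (fun w h => h).
rewrite fineP_C // in p3.
move: E1 E2 E3 E4 Fs1 Fs2 GM1 GM2.
rewrite /SX /SY1 /SY2 /SZm /SZp in p1 p2 p3 *.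
rewrite !ltr_distlC => /andP[? ?] /andP[? ?] /andP[? ?] /andP[? ?] /andP[? ?] /andP[? ?] /andP[? ?] /andP[? ?].
have ddE : dd = dl / 8 by []. lra.
Qed.
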